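(* Let $4\le\beta\le n-2$ and let $\gamma_1,\gamma_2,\gamma_3$ be integers with $\gamma_1,\gamma_2,\gamma_3\ge 2$ and $\gamma_1+\gamma_2+\gamma_3=n$. Then $\mathcal T_{(n),(\beta),(\gamma_1,\gamma_2,\gamma_3)}$ has infinitely many $G$-orbits.
   Context: $\mathbb F$ is an infinite field of characteristic $\ne 2$. Equip $\mathbb F^{2n}$ (canonical basis $e_1,\ldots,e_{2n}$) with the symmetric bilinear form $(e_i,e_j)=\delta_{i,2n+1-j}$, and let $G={\rm O}_{2n}(\mathbb F)$ be its isometry group. A subspace $V$ is isotropic if $(V,V)=\{0\}$. For a sequence ${\bf a}=(\alpha_1,\ldots,\alpha_p)$ of positive integers with $\sum\alpha_j\le n$, $M_{\bf a}$ is the set of flags $V_1\subset\cdots\subset V_p$ in $\mathbb F^{2n}$ with $\dim V_j=\alpha_1+\cdots+\alpha_j$ and $V_p$ isotropic. $\mathcal T_{{\bf a},{\bf b},{\bf c}}=M_{\bf a}\times M_{\bf b}\times M_{\bf c}$ with the diagonal $G$-action. *)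

(* Defs.v *)
From HB Require Import structures.
From mathcomp Require Import all_boot all_order all_algebra.
Set Implicit Arguments. Unset Strict Implicit. Unset Printing Implicit Defensive.
Import GRing.Theory.
Local Open Scope ring_scope.

(* Vectors of F^{2n} are row vectors 'rV[F]_(2*n); e_i is the i-th unit row
   vector (0-indexed).  The form is (u,v) = u J v^T with J the antidiagonal
   matrix, i.e. (e_i, e_j) = delta_{i, 2n-1-j} (0-indexed) = delta_{i,2n+1-j}
   (1-indexed). *)

Definition Jform (F : fieldType) (n : nat) : 'M[F]_(2 * n) :=
  \matrix_(i, j) ((i + j == (2 * n).-1)%N)%:R.

Definition bform (F : fieldType) (n : nat) (u v : 'rV[F]_(2 * n)) : F :=
  (u *m Jform F n *m v^T) 0 0.

Definition is_isometry (F : fieldType) (n : nat) (g : 'M[F]_(2 * n)) : Prop :=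
  g \in unitmx /\ forall u v, bform (u *m g) (v *m g) = bform u v.

Definition isotropic (F : fieldType) (n : nat) (V : {vspace 'rV[F]_(2 * n)}) : Prop :=
  forall u v, u \in V -> v \in V -> bform u v = 0.

(* M_a : flags V_1 ⊂ ... ⊂ V_p (p = size a), dim V_j = a_1 + ... + a_j,
   V_p isotropic.  A flag is represented by the sequence [:: V_1; ...; V_p]. *)
Definition is_flag (F : fieldType) (n : nat) (a : seq nat)
    (V : seq {vspace 'rV[F]_(2 * n)}) : Prop :=
  [/\ size V = size a,
      (forall j, (j < size a)%N ->
         \dim (nth 0%VS V j) = (\sum_(i < j.+1) nth 0%N a i)%N),
      (forall j, (j.+1 < size a)%N -> (nth 0%VS V j <= nth 0%VS V j.+1)%VS)
    & isotropic (last 0%VS V)].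

Definition flag_act (F : fieldType) (n : nat) (g : 'M[F]_(2 * n))
    (V : seq {vspace 'rV[F]_(2 * n)}) : seq {vspace 'rV[F]_(2 * n)} :=
  map (fun W => (linfun (fun v : 'rV[F]_(2 * n) => v *m g) @: W)%VS) V.

Definition triple (F : fieldType) (n : nat) : Type :=
  (seq {vspace 'rV[F]_(2 * n)} * seq {vspace 'rV[F]_(2 * n)} *
   seq {vspace 'rV[F]_(2 * n)})%type.

Definition in_T (F : fieldType) (n : nat) (a b c : seq nat) (t : triple F n) : Prop :=
  is_flag a t.1.1 /\ is_flag b t.1.2 /\ is_flag c t.2.

Definition same_orbit (F : fieldType) (n : nat) (s t : triple F n) : Prop :=
  exists g, is_isometry g /\
    flag_act g s.1.1 = t.1.1 /\ flag_act g s.1.2 = t.1.2 /\ flag_act g s.2 = t.2.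

Definition finitely_many_orbits (F : fieldType) (n : nat) (a b c : seq nat) : Prop :=
  exists (N : nat) (r : nat -> triple F n),
    (forall i, (i < N)%N -> in_T a b c (r i)) /\
    (forall t, in_T a b c t -> exists i, (i < N)%N /\ same_orbit (r i) t).

(* Main.v *)
Require Import Defs.
From HB Require Import structures.
From mathcomp Require Import all_boot all_order all_algebra.
From mathcomp Require Import zify ring.
Set Implicit Arguments. Unset Strict Implicit. Unset Printing Implicit Defensive.
Import GRing.Theory.
Local Open Scope ring_scope.

Section Prelim.
Variables (F : fieldType) (n : nat).
Local Notation rV := ('rV[F]_(2 * n)).

Lemma lf_apply (g : 'M[F]_(2 * n)) (v : rV) : linfun (mulmx^~ g) v = v *m g.
Proof. by rewrite (lfunE (mulmxr g)). Qed.

Lemma bformDl (u u' v : rV) : bform (u + u') v = bform u v + bform u' v.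
Proof. by rewrite /bform !mulmxDl mxE. Qed.
Lemma bformZl a (u v : rV) : bform (a *: u) v = a * bform u v.
Proof. by rewrite /bform -!scalemxAl mxE. Qed.
Lemma bformDr (u v v' : rV) : bform u (v + v') = bform u v + bform u v'.
Proof. by rewrite /bform linearD /= mulmxDr mxE. Qed.
Lemma bformZr a (u v : rV) : bform u (a *: v) = a * bform u v.
Proof. by rewrite /bform linearZ /= -scalemxAr mxE. Qed.
Lemma bformNl (u v : rV) : bform (- u) v = - bform u v.
Proof. by rewrite -scaleN1r bformZl mulN1r. Qed.
Lemma bformNr (u v : rV) : bform u (- v) = - bform u v.
Proof. by rewrite -scaleN1r bformZr mulN1r. Qed.
Lemma bformBl (u u' v : rV) : bform (u - u') v = bform u v - bform u' v.
Proof. by rewrite bformDl bformNl. Qed.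
Lemma bformBr (u v v' : rV) : bform u (v - v') = bform u v - bform u v'.
Proof. by rewrite bformDr bformNr. Qed.
Lemma bform0l (v : rV) : bform 0 v = 0.
Proof. by rewrite -(scale0r 0) bformZl mul0r. Qed.
Lemma bform0r (v : rV) : bform v 0 = 0.
Proof. by rewrite -(scale0r 0) bformZr mul0r. Qed.

Lemma Jform_tr : (Jform F n)^T = Jform F n.
Proof. by apply/matrixP => i j; rewrite !mxE addnC. Qed.

Lemma bformC (u v : rV) : bform u v = bform v u.
Proof.
rewrite /bform; have -> : v *m Jform F n *m u^T = (u *m Jform F n *m v^T)^T.
  by rewrite !trmx_mul trmxK Jform_tr mulmxA.
by rewrite [RHS]mxE.
Qed.

Definition ee (k : nat) : rV := \row_(j < 2 * n) ((j == k :> nat)%:R).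
Definition rv (k : nat) : rV := ee ((2 * n).-1 - k).

Lemma ee_delta k (hk : (k < 2 * n)%N) : ee k = delta_mx 0 (Ordinal hk).
Proof. by apply/rowP => j; rewrite !mxE /= -val_eqE. Qed.

Lemma bform_ee p r : (p < 2 * n)%N -> (r < 2 * n)%N ->
  bform (ee p) (ee r) = ((p + r == (2 * n).-1)%N)%:R.
Proof.
move=> hp hr; rewrite (ee_delta hp) (ee_delta hr) /bform -rowE trmx_delta -colE.
by rewrite !mxE.
Qed.

Lemma bf_ee_ee p r : (p < n)%N -> (r < n)%N -> bform (ee p) (ee r) = 0.
Proof.
move=> hp hr; rewrite bform_ee; try lia.
by have -> : (p + r == (2 * n).-1)%N = false by apply/eqP; lia.
Qed.
Lemma bf_ee_rv p r : (p < n)%N -> (r < n)%N -> bform (ee p) (rv r) = (p == r)%:R.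
Proof.
move=> hp hr; rewrite /rv bform_ee; try lia.
by have -> : (p + ((2 * n).-1 - r) == (2 * n).-1)%N = (p == r) by apply/idP/idP => /eqP H; apply/eqP; lia.
Qed.
Lemma bf_rv_ee p r : (p < n)%N -> (r < n)%N -> bform (rv p) (ee r) = (p == r)%:R.
Proof. by move=> hp hr; rewrite bformC bf_ee_rv // eq_sym. Qed.
Lemma bf_rv_rv p r : (p < n)%N -> (r < n)%N -> bform (rv p) (rv r) = 0.
Proof.
move=> hp hr; rewrite /rv bform_ee; try lia.
by have -> : ((2 * n).-1 - p + ((2 * n).-1 - r) == (2 * n).-1)%N = false by apply/eqP; lia.
Qed.

Lemma span_ortho_l (X : seq rV) w : (forall x, x \in X -> bform x w = 0) ->
  forall u, u \in <<X>>%VS -> bform u w = 0.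
Proof.
elim: X => [|x X IH] hX u.
  by rewrite span_nil memv0 => /eqP ->; rewrite bform0l.
rewrite span_cons => /memv_addP [a /vlineP [k ->] [b hb ->]].
rewrite bformDl bformZl hX ?mem_head // IH ?mulr0 ?add0r // => z hz.
by apply: hX; rewrite inE hz orbT.
Qed.

Lemma span_ortho_r (X : seq rV) w : (forall x, x \in X -> bform w x = 0) ->
  forall u, u \in <<X>>%VS -> bform w u = 0.
Proof.
move=> hX u hu; rewrite bformC; apply: (span_ortho_l _ hu) => x hx.
by rewrite bformC hX.
Qed.

Lemma iso_span (X : seq rV) : (forall x, x \in X -> forall y, y \in X -> bform x y = 0) ->
  isotropic <<X>>%VS.
Proof.
move=> hX u v hu hv; apply: (span_ortho_l _ hu) => x hx.
by apply: (span_ortho_r _ hv) => y hy; apply: hX.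
Qed.

Lemma notin_span (X : seq rV) x y : bform x y != 0 ->
  (forall z, z \in X -> bform z y = 0) -> x \notin <<X>>%VS.
Proof.
move=> hxy hX; apply/negP => hx; move: hxy; by rewrite (span_ortho_l hX hx) eqxx.
Qed.

Lemma free_ee k a : (a + k <= n)%N -> free (map ee (iota a k)).
Proof.
elim: k a => [|k IH] a hak; first by rewrite /free span_nil dimv0.
rewrite /= free_cons IH ?andbT; last lia.
apply: (notin_span (y := rv a)); first by rewrite bf_ee_rv ?eqxx ?oner_eq0 //; lia.
move=> z /mapP [j]; rewrite mem_iota => hj ->; rewrite bf_ee_rv; try lia.
by have -> : (j == a) = false by apply/eqP; lia.
Qed.

Lemma free_rv k a : (a + k <= n)%N -> free (map rv (iota a k)).
Proof.
elim: k a => [|k IH] a hak; first by rewrite /free span_nil dimv0.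
rewrite /= free_cons IH ?andbT; last lia.
apply: (notin_span (y := ee a)); first by rewrite bf_rv_ee ?eqxx ?oner_eq0 //; lia.
move=> z /mapP [j]; rewrite mem_iota => hj ->; rewrite bf_rv_ee; try lia.
by have -> : (j == a) = false by apply/eqP; lia.
Qed.

Lemma dim_free (X : seq rV) : free X -> \dim <<X>>%VS = size X.
Proof. by move/eqP. Qed.

End Prelim.

Lemma forall_cons (T : eqType) (P : T -> Prop) x X : P x -> (forall z, z \in X -> P z) ->
  forall z, z \in x :: X -> P z.
Proof. by move=> hx hX z; rewrite in_cons => /predU1P [->|/hX]. Qed.
Lemma forall_nil (T : eqType) (P : T -> Prop) : forall z, z \in [::] -> P z.
Proof. by []. Qed.
Lemma forall_iota (T : eqType) (P : T -> Prop) f a k :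
  (forall j, (a <= j)%N -> (j < a + k)%N -> P (f j)) ->
  forall z, z \in map f (iota a k) -> P z.
Proof. by move=> h z /mapP [j]; rewrite mem_iota => /andP [h1 h2] ->; apply: h. Qed.

Ltac forall_list :=
  rewrite /=; repeat match goal with
  | |- forall z, is_true (z \in _ :: _) -> _ => apply: forall_cons
  | |- forall z, is_true (z \in [::]) -> _ => apply: forall_nil
  | |- forall z, is_true (z \in map _ (iota _ _)) -> _ => apply: forall_iota
  end.

Ltac nat_eqs :=
  repeat match goal with
  | |- context [@eq_op ?T ?a ?b] =>
      lazymatch type of a with
      | nat => first [ have -> : (a == b) = false by apply/eqP; lia
                     | have -> : (a == b) = true by apply/eqP; lia ]
      end
  end.

Ltac bf_expand :=
  rewrite ?(bformDl, bformBl, bformDr, bformBr, bformZl, bformZr, bformNl, bformNr).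

Ltac bf_eval :=
  bf_expand;
  rewrite ?bf_rv_rv ?bf_ee_rv ?bf_rv_ee ?bf_ee_ee; try lia;
  nat_eqs; rewrite /=.

Section Invariance.
Variables (F : fieldType) (n : nat).
Local Notation rV := ('rV[F]_(2 * n)).

Definition Inv (t : (seq {vspace rV} * seq {vspace rV} * seq {vspace rV})%type) (lam : F) : Prop :=
  let: (VL, VB, VC) := t in
  let L : {vspace rV} := nth 0%VS VL 0 in let B : {vspace rV} := nth 0%VS VB 0 in
  let C1 : {vspace rV} := nth 0%VS VC 0 in let C2 : {vspace rV} := nth 0%VS VC 1 in
  let C3 : {vspace rV} := nth 0%VS VC 2 in
  exists x1 x2 x3 x4 y1 y2 y3 y4 c1 c2 : rV,
  [/\ x1 \in L, x2 \in L, x3 \in L & x4 \in L] /\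
  [/\ y1 \in C3, y2 \in C3, y3 \in C3 & y4 \in C3] /\
  [/\ x1 + y1 \in B, x2 + y2 \in B, x3 + y3 \in B & x4 + y4 \in B] /\
  [/\ c1 \in L, c2 \in L, (forall b, b \in B -> bform c1 b = 0)
    & (forall b, b \in B -> bform c2 b = 0)] /\
  [/\ (forall h, h \in C2 -> bform (x1 + c1) h = 0),
      (forall h, h \in C2 -> bform (x2 + c2) h = 0),
      (forall h, h \in C1 -> bform x3 h = 0)
    & (forall h, h \in C1 -> bform x4 h = 0)] /\
  [/\ bform x1 y2 != 0, bform x3 y4 != 0 &
      lam * (bform x1 y3 * bform x2 y4 - bform x1 y4 * bform x2 y3)
        = bform x1 y2 * bform x3 y4].

Definition act_triple (g : 'M[F]_(2 * n)) (s : triple F n) : triple F n :=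
  (flag_act g s.1.1, flag_act g s.1.2, flag_act g s.2).

Lemma nth_act (g : 'M[F]_(2 * n)) (V : seq {vspace rV}) i :
  nth 0%VS (flag_act g V) i = (linfun (mulmx^~ g) @: nth 0%VS V i)%VS.
Proof.
rewrite /flag_act; case: (ltnP i (size V)) => h; first by rewrite (nth_map 0%VS).
by rewrite !nth_default ?size_map // limg0.
Qed.

Lemma img_in (g : 'M[F]_(2 * n)) (U : {vspace rV}) u : u \in U -> u *m g \in (linfun (mulmx^~ g) @: U)%VS.
Proof. by move=> hu; rewrite -lf_apply; apply: memv_img. Qed.

Lemma img_pre (g : 'M[F]_(2 * n)) (U : {vspace rV}) v : v \in (linfun (mulmx^~ g) @: U)%VS ->
  exists2 u, u \in U & v = u *m g.
Proof. by case/memv_imgP => u hu ->; exists u; rewrite ?lf_apply. Qed.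

Lemma Inv_fwd (g : 'M[F]_(2 * n)) (s : triple F n) lam : is_isometry g -> Inv s lam -> Inv (act_triple g s) lam.
Proof.
case: s => [[VL VB] VC]; case=> hg hiso.
rewrite /Inv /act_triple /= !nth_act.
case=> [x1 [x2 [x3 [x4 [y1 [y2 [y3 [y4 [c1 [c2]]]]]]]]]].
case=> [[hx1 hx2 hx3 hx4] [[hy1 hy2 hy3 hy4] [[hb1 hb2 hb3 hb4] [[hc1 hc2 hcb1 hcb2]
  [[ho1 ho2 ho3 ho4] [hn1 hn2 heq]]]]]].
exists (x1 *m g), (x2 *m g), (x3 *m g), (x4 *m g), (y1 *m g), (y2 *m g), (y3 *m g),
  (y4 *m g), (c1 *m g), (c2 *m g).
rewrite !hiso.
split; first by split; apply: img_in.
split; first by split; apply: img_in.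
split; first by split; rewrite -mulmxDl; apply: img_in.
split.
  split; try (by apply: img_in); move=> b /img_pre [b' hb' ->]; rewrite hiso; auto.
split; first by split; move=> h /img_pre [h' hh' ->]; rewrite -?mulmxDl hiso; auto.
by split.
Qed.

Lemma Inv_bwd (g : 'M[F]_(2 * n)) (s : triple F n) lam : is_isometry g -> Inv (act_triple g s) lam -> Inv s lam.
Proof.
case: s => [[VL VB] VC]; case=> hg hiso.
have ginj : injective (mulmx^~ g : rV -> rV) := can_inj (mulmxK hg).
rewrite /Inv /act_triple /= !nth_act.
case=> [x1 [x2 [x3 [x4 [y1 [y2 [y3 [y4 [c1 [c2]]]]]]]]]].
case=> [[hx1 hx2 hx3 hx4] [[hy1 hy2 hy3 hy4] [[hb1 hb2 hb3 hb4] [[hc1 hc2 hcb1 hcb2]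
  [[ho1 ho2 ho3 ho4] [hn1 hn2 heq]]]]]].
case/img_pre: hx1 => [x1' hx1 ex1]; case/img_pre: hx2 => [x2' hx2 ex2].
case/img_pre: hx3 => [x3' hx3 ex3]; case/img_pre: hx4 => [x4' hx4 ex4].
case/img_pre: hy1 => [y1' hy1 ey1]; case/img_pre: hy2 => [y2' hy2 ey2].
case/img_pre: hy3 => [y3' hy3 ey3]; case/img_pre: hy4 => [y4' hy4 ey4].
case/img_pre: hc1 => [c1' hc1 ec1]; case/img_pre: hc2 => [c2' hc2 ec2].
subst.
exists x1', x2', x3', x4', y1', y2', y3', y4', c1', c2'.
rewrite !hiso in hn1 hn2 heq.
split; first by split.
split; first by split.
split.
  split; [move: hb1 | move: hb2 | move: hb3 | move: hb4];
  by rewrite -mulmxDl => /img_pre [b hb /ginj ->].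
split.
  split => // b hb; rewrite -hiso; [apply: hcb1 | apply: hcb2]; exact: img_in.
split.
  split => h hh; rewrite -hiso ?mulmxDl; [apply: ho1 | apply: ho2 | apply: ho3 | apply: ho4];
  exact: img_in.
by split.
Qed.

End Invariance.

Section Family.
Set Default Proof Using "All".
Variables (F : fieldType) (n beta g1 g2 g3 : nat) (nu : F).
Hypotheses (hb1 : (4 <= beta)%N) (hb2 : (beta <= n - 2)%N)
    (hg1 : (2 <= g1)%N) (hg2 : (2 <= g2)%N) (hg3 : (2 <= g3)%N)
    (hsum : (g1 + g2 + g3)%N = n).
Local Notation rV := ('rV[F]_(2 * n)).
Local Notation ee := (@ee F n).
Local Notation rv := (@rv F n).

Definition bb0 : rV := ee 0 + rv 1.
Definition bb1 : rV := ee 1 - rv 0.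
Definition bb2 : rV := ee 2 + rv 3.
Definition bb3 : rV := ee 3 - rv 2.
Definition Btail := map ee (iota 4 (beta - 4)).
Definition LL : {vspace rV} := <<map ee (iota 0 n)>>%VS.
Definition BB : {vspace rV} := <<[:: bb0; bb1; bb2; bb3] ++ Btail>>%VS.
Definition C1tail := map rv (iota (g3 + g2) (g1 - 2)).
Definition C2tail := map rv (iota (g3 + 2) (g1 + g2 - 4)).
Definition CC1 : {vspace rV} :=
  <<[:: rv 0 - rv 2 - rv (n - 2); nu *: rv 1 - rv 3 - nu *: rv (n - 1)] ++ C1tail>>%VS.
Definition CC2 : {vspace rV} :=
  <<[:: rv 0 - rv (n - 2); rv 1 - rv (n - 1); rv 2; rv 3] ++ C2tail>>%VS.
Definition CC3 : {vspace rV} := <<map rv (iota 0 n)>>%VS.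
Definition fam : triple F n := ([:: LL], [:: BB], [:: CC1; CC2; CC3]).

Ltac fin := rewrite ?(addr0, add0r, subr0, sub0r, oppr0, opprK, mulr0, mul0r, mulr1, mul1r);
  rewrite ?oner_eq0 ?oppr_eq0 ?oner_eq0 //.

Lemma flagL : is_flag [:: n] [:: LL].
Proof.
split => //.
- case=> // _; rewrite big_ord_recr big_ord0 /= add0n /LL dim_free ?size_map ?size_iota //.
  apply: free_ee; lia.
- rewrite /=; apply: iso_span; forall_list => j hj1 hj2; forall_list => k hk1 hk2.
  by bf_eval.
Qed.

Lemma freeB : free ([:: bb0; bb1; bb2; bb3] ++ Btail).
Proof.
rewrite /= !free_cons /Btail free_ee ?andbT; last lia.
apply/and4P; split.
- apply: (notin_span (y := rv 0)); rewrite /bb0; first by bf_eval; fin.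
  forall_list; rewrite /bb1 /bb2 /bb3; try move=> j hj1 hj2; bf_eval; by ring.
- apply: (notin_span (y := rv 1)); rewrite /bb1; first by bf_eval; fin.
  forall_list; rewrite /bb2 /bb3; try move=> j hj1 hj2; bf_eval; by ring.
- apply: (notin_span (y := rv 2)); rewrite /bb2; first by bf_eval; fin.
  forall_list; rewrite /bb3; try move=> j hj1 hj2; bf_eval; by ring.
- apply: (notin_span (y := rv 3)); rewrite /bb3; first by bf_eval; fin.
  forall_list; try move=> j hj1 hj2; bf_eval; by ring.
Qed.

Lemma mem_tail (f : nat -> rV) a k j : (a <= j)%N -> (j < a + k)%N -> f j \in map f (iota a k).
Proof. by move=> h1 h2; apply: map_f; rewrite mem_iota h1 h2. Qed.

Ltac inlist := rewrite ?mem_cat ?in_cons ?eqxx ?orbT //=; try (apply/orP; right);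
  try (apply: mem_tail; lia).

Lemma flagB : is_flag [:: beta] [:: BB].
Proof.
split => //.
- case=> // _; rewrite big_ord_recr big_ord0 /= add0n /BB dim_free ?freeB //.
  rewrite size_cat /Btail size_map size_iota /=; lia.
- rewrite /= /BB /Btail; apply: iso_span; forall_list; rewrite /bb0 /bb1 /bb2 /bb3;
    try move=> j hj1 hj2; forall_list; rewrite /bb0 /bb1 /bb2 /bb3;
    try move=> k hk1 hk2; bf_eval; by ring.
Qed.

Lemma freeC3 : free (map rv (iota 0 n)).
Proof. apply: free_rv; lia. Qed.

Lemma freeC2 : free ([:: rv 0 - rv (n - 2); rv 1 - rv (n - 1); rv 2; rv 3] ++ C2tail).
Proof.
rewrite /= !free_cons /C2tail free_rv ?andbT; last lia.
apply/and4P; split.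
- apply: (notin_span (y := ee 0)); first by bf_eval; fin.
  forall_list; try move=> j hj1 hj2; bf_eval; by ring.
- apply: (notin_span (y := ee 1)); first by bf_eval; fin.
  forall_list; try move=> j hj1 hj2; bf_eval; by ring.
- apply: (notin_span (y := ee 2)); first by bf_eval; fin.
  forall_list; try move=> j hj1 hj2; bf_eval; by ring.
- apply: (notin_span (y := ee 3)); first by bf_eval; fin.
  forall_list; try move=> j hj1 hj2; bf_eval; by ring.
Qed.

Lemma freeC1 : free ([:: rv 0 - rv 2 - rv (n - 2); nu *: rv 1 - rv 3 - nu *: rv (n - 1)] ++ C1tail).
Proof.
rewrite /= !free_cons /C1tail free_rv ?andbT; last lia.
apply/andP; split.
- apply: (notin_span (y := ee 0)); first by bf_eval; fin.
  forall_list; try move=> j hj1 hj2; bf_eval; by ring.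
- apply: (notin_span (y := ee 3)); first by bf_eval; fin.
  forall_list; try move=> j hj1 hj2; bf_eval; by ring.
Qed.

Lemma C1subC2 : (CC1 <= CC2)%VS.
Proof.
apply/span_subvP => z; move: z; rewrite /C1tail; forall_list.
- have -> : rv 0 - rv 2 - rv (n - 2) = (rv 0 - rv (n - 2)) - rv 2 by rewrite addrAC.
  by apply: rpredB; apply: memv_span; inlist.
- have -> : nu *: rv 1 - rv 3 - nu *: rv (n - 1) = nu *: (rv 1 - rv (n - 1)) - rv 3.
    by rewrite scalerBr addrAC.
  by apply: memvB; [apply: memvZ|]; apply: memv_span; inlist.
- move=> j hj1 hj2; apply: memv_span; inlist.
Qed.

Lemma C2subC3 : (CC2 <= CC3)%VS.
Proof.
apply/span_subvP => z; move: z; rewrite /C2tail; forall_list; try move=> j hj1 hj2;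
  rewrite ?memvB //; apply: memv_span; apply: mem_tail; lia.
Qed.

Lemma flagC : is_flag [:: g1; g2; g3] [:: CC1; CC2; CC3].
Proof.
split => //.
- case=> [_|[_|[_|//]]]; rewrite !big_ord_recr big_ord0 /=.
  + rewrite /CC1 dim_free ?freeC1 // size_cat /C1tail size_map size_iota /=; lia.
  + rewrite /CC2 dim_free ?freeC2 // size_cat /C2tail size_map size_iota /=; lia.
  + rewrite /CC3 dim_free ?freeC3 // size_map size_iota /=; lia.
- case=> [_|[_|//]]; [exact: C1subC2 | exact: C2subC3].
- rewrite /= /CC3; apply: iso_span; forall_list => j hj1 hj2; forall_list => k hk1 hk2.
  by bf_eval.
Qed.

Lemma fam_in_T : in_T [:: n] [:: beta] [:: g1; g2; g3] fam.
Proof. by split; [exact: flagL | split; [exact: flagB | exact: flagC]]. Qed.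


Lemma inLL k : (k < n)%N -> ee k \in LL.
Proof. move=> hk; apply: memv_span; apply: mem_tail; lia. Qed.
Lemma inC3 k : (k < n)%N -> rv k \in CC3.
Proof. move=> hk; apply: memv_span; apply: mem_tail; lia. Qed.
Lemma LL_iso u v : u \in LL -> v \in LL -> bform u v = 0.
Proof. by case: flagL => _ _ _; apply. Qed.
Lemma C3_iso u v : u \in CC3 -> v \in CC3 -> bform u v = 0.
Proof. by case: flagC => _ _ _; apply. Qed.
Lemma inBB0 : bb0 \in BB. Proof. by apply: memv_span; inlist. Qed.
Lemma inBB1 : bb1 \in BB. Proof. by apply: memv_span; inlist. Qed.
Lemma inBB2 : bb2 \in BB. Proof. by apply: memv_span; inlist. Qed.
Lemma inBB3 : bb3 \in BB. Proof. by apply: memv_span; inlist. Qed.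

Lemma BB_decomp b : b \in BB -> exists k0 k1 k2 k3 r,
  r \in <<Btail>>%VS /\ b = k0 *: bb0 + (k1 *: bb1 + (k2 *: bb2 + (k3 *: bb3 + r))).
Proof.
rewrite /BB /= !span_cons.
case/memv_addP => [u0 /vlineP [k0 ->] [b1 + ->]].
case/memv_addP => [u1 /vlineP [k1 ->] [b2 + ->]].
case/memv_addP => [u2 /vlineP [k2 ->] [b3 + ->]].
case/memv_addP => [u3 /vlineP [k3 ->] [r hr ->]].
by exists k0, k1, k2, k3, r.
Qed.

Lemma Btail_LL r : r \in <<Btail>>%VS -> r \in LL.
Proof.
move=> hr; have hs : (<<Btail>> <= LL)%VS.
  apply/span_subvP => z; move: z; rewrite /Btail.
  forall_list => j hj1 hj2; apply: inLL; lia.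
by move/subvP: hs; apply.
Qed.

Lemma Btail_rv r k : r \in <<Btail>>%VS -> (k < 4 \/ beta <= k < n)%N -> bform r (rv k) = 0.
Proof.
move=> hr hk; apply: (span_ortho_l _ hr); rewrite /Btail; forall_list => j hj1 hj2.
rewrite bf_ee_rv; try lia.
by have -> : (j == k) = false by apply/eqP; lia.
Qed.

Lemma coordB x y k : x \in LL -> y \in CC3 -> (k < n)%N ->
  bform x (rv k) = bform (x + y) (rv k).
Proof.
move=> hx hy hk; rewrite bformDl (C3_iso hy (inC3 hk)) addr0 //.
Qed.

Lemma far_coord x y : x \in LL -> y \in CC3 -> x + y \in BB ->
  bform x (rv (n - 2)) = 0 /\ bform x (rv (n - 1)) = 0.
Proof.
move=> hx hy hb; rewrite !(coordB hx hy); try lia.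
case/BB_decomp: hb => [k0 [k1 [k2 [k3 [r [hr ->]]]]]].
split; bf_expand; rewrite !(Btail_rv hr); try lia;
  rewrite /bb0 /bb1 /bb2 /bb3; bf_eval; ring.
Qed.

Lemma sig_form x y x' : x \in LL -> y \in CC3 -> x + y \in BB -> x' \in LL ->
  bform x' y = bform x' (rv 1) * bform x (rv 0) - bform x' (rv 0) * bform x (rv 1)
    + bform x' (rv 3) * bform x (rv 2) - bform x' (rv 2) * bform x (rv 3).
Proof.
move=> hx hy hb hx'.
have -> : bform x' y = bform x' (x + y) by rewrite bformDr (LL_iso hx' hx) add0r.
rewrite !(coordB hx hy); try lia.
case/BB_decomp: hb => [k0 [k1 [k2 [k3 [r [hr ->]]]]]].
have hrL := Btail_LL hr.
bf_expand; rewrite !(Btail_rv hr); try lia.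
rewrite /bb0 /bb1 /bb2 /bb3; bf_expand.
have z0 : bform x' (ee 0) = 0 by apply: (LL_iso hx'); apply: inLL; lia.
have z1 : bform x' (ee 1) = 0 by apply: (LL_iso hx'); apply: inLL; lia.
have z2 : bform x' (ee 2) = 0 by apply: (LL_iso hx'); apply: inLL; lia.
have z3 : bform x' (ee 3) = 0 by apply: (LL_iso hx'); apply: inLL; lia.
rewrite (LL_iso hx' hrL) z0 z1 z2 z3.
bf_eval; ring.
Qed.

Lemma c_coord c : c \in LL -> (forall b, b \in BB -> bform c b = 0) ->
  bform c (rv 2) = 0 /\ bform c (rv 3) = 0.
Proof.
move=> hc hB; have h2 := hB _ inBB2; have h3 := hB _ inBB3.
have e2 : bform c (ee 2) = 0 by apply: (LL_iso hc); apply: inLL; lia.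
have e3 : bform c (ee 3) = 0 by apply: (LL_iso hc); apply: inLL; lia.
move: h2 h3; rewrite /bb2 /bb3 bformDr bformBr e2 e3 add0r sub0r => -> /eqP.
by rewrite oppr_eq0 => /eqP ->.
Qed.

Lemma fam_unique lam : Inv fam lam -> lam = 1 + nu.
Proof.
rewrite /Inv /fam /=.
case=> [x1 [x2 [x3 [x4 [y1 [y2 [y3 [y4 [c1 [c2]]]]]]]]]].
case=> [[hx1 hx2 hx3 hx4] [[hy1 hy2 hy3 hy4] [[hw1 hw2 hw3 hw4] [[hc1 hc2 hcb1 hcb2]
  [[ho1 ho2 ho3 ho4] [hn1 hn2 heq]]]]]].
have [c12 c13] := c_coord hc1 hcb1.
have [c22 c23] := c_coord hc2 hcb2.
have inC2_2 : rv 2 \in CC2 by apply: memv_span; inlist.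
have inC2_3 : rv 3 \in CC2 by apply: memv_span; inlist.
have inC1_a : rv 0 - rv 2 - rv (n - 2) \in CC1 by apply: memv_span; inlist.
have inC1_b : nu *: rv 1 - rv 3 - nu *: rv (n - 1) \in CC1 by apply: memv_span; inlist.
have x12 : bform x1 (rv 2) = 0.
  by have := ho1 _ inC2_2; rewrite bformDl c12 addr0.
have x13 : bform x1 (rv 3) = 0.
  by have := ho1 _ inC2_3; rewrite bformDl c13 addr0.
have x22 : bform x2 (rv 2) = 0.
  by have := ho2 _ inC2_2; rewrite bformDl c22 addr0.
have x23 : bform x2 (rv 3) = 0.
  by have := ho2 _ inC2_3; rewrite bformDl c23 addr0.
have [f3a f3b] := far_coord hx3 hy3 hw3.
have [f4a f4b] := far_coord hx4 hy4 hw4.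
have x32 : bform x3 (rv 2) = bform x3 (rv 0).
  have := ho3 _ inC1_a; rewrite !bformBr f3a subr0 => /eqP; rewrite subr_eq0 => /eqP ->.
  done.
have x42 : bform x4 (rv 2) = bform x4 (rv 0).
  have := ho4 _ inC1_a; rewrite !bformBr f4a subr0 => /eqP; rewrite subr_eq0 => /eqP ->.
  done.
have x33 : bform x3 (rv 3) = nu * bform x3 (rv 1).
  have := ho3 _ inC1_b; rewrite !bformBr !bformZr f3b mulr0 subr0 => /eqP.
  by rewrite subr_eq0 => /eqP ->.
have x43 : bform x4 (rv 3) = nu * bform x4 (rv 1).
  have := ho4 _ inC1_b; rewrite !bformBr !bformZr f4b mulr0 subr0 => /eqP.
  by rewrite subr_eq0 => /eqP ->.
set a := bform x1 (rv 0) in x12 x13 *; set b := bform x1 (rv 1) in x12 x13 *.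
set a' := bform x2 (rv 0); set b' := bform x2 (rv 1).
set p := bform x3 (rv 0) in x32 *; set q := bform x3 (rv 1) in x33 *.
set p' := bform x4 (rv 0) in x42 *; set q' := bform x4 (rv 1) in x43 *.
have s12 : bform x1 y2 = - (a * b' - a' * b).
  by rewrite (sig_form hx2 hy2 hw2 hx1) x12 x13 x22 x23 -/a -/b -/a' -/b'; ring.
have s34 : bform x3 y4 = - ((1 + nu) * (p * q' - p' * q)).
  by rewrite (sig_form hx4 hy4 hw4 hx3) x32 x33 x42 x43 -/p -/q -/p' -/q'; ring.
have E : lam * (bform x1 y3 * bform x2 y4 - bform x1 y4 * bform x2 y3)
    = lam * ((a * b' - a' * b) * (p * q' - p' * q)).
  rewrite (sig_form hx3 hy3 hw3 hx1) (sig_form hx4 hy4 hw4 hx2) (sig_form hx4 hy4 hw4 hx1)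
    (sig_form hx3 hy3 hw3 hx2) x12 x13 x22 x23 x32 x33 x42 x43 -/a -/b -/a' -/b' -/p -/q -/p' -/q'.
  ring.
rewrite E s12 s34 in heq; rewrite s12 oppr_eq0 in hn1; rewrite s34 oppr_eq0 mulf_eq0 negb_or in hn2.
case/andP: hn2 => _ hn2.
have hD : (a * b' - a' * b) * (p * q' - p' * q) != 0 by rewrite mulf_neq0.
apply: (mulIf hD); rewrite heq; ring.
Qed.

Lemma fam_exists : 1 + nu != 0 -> Inv fam (1 + nu).
Proof.
move=> hnu; rewrite /Inv /fam /=.
exists (ee 0), (ee 1), (ee 0 + ee 2), (ee 1 + nu *: ee 3), (rv 1), (- rv 0),
  (rv 1 + rv 3), (- rv 0 - nu *: rv 2), (ee (n - 2)), (ee (n - 1)).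
split.
  by split; rewrite ?rpredD ?rpredZ ?inLL //; lia.
split.
  by split; rewrite ?rpredB ?rpredN ?rpredD ?rpredZ ?inC3 //; lia.
split.
  split; [exact: inBB0 | exact: inBB1 | |].
  - have -> : ee 0 + ee 2 + (rv 1 + rv 3) = bb0 + bb2 by rewrite addrACA.
    by rewrite rpredD ?inBB0 ?inBB2.
  - have -> : ee 1 + nu *: ee 3 + (- rv 0 - nu *: rv 2) = bb1 + nu *: bb3.
      by rewrite /bb1 /bb3 scalerBr addrACA.
    by rewrite rpredD ?rpredZ ?inBB1 ?inBB3.
split.
  split; rewrite ?rpredN ?inLL //; try lia;
  move=> b hb; apply: (span_ortho_r _ hb); rewrite /Btail; forall_list;
  rewrite /bb0 /bb1 /bb2 /bb3; try move=> j hj1 hj2; bf_eval; ring.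
split.
  split; move=> h hh; apply: (span_ortho_r _ hh); rewrite /C1tail /C2tail; forall_list;
  try move=> j hj1 hj2; bf_eval; ring.
split.
- by bf_eval; rewrite ?(addr0, add0r, subr0, sub0r, oppr0, opprK) oppr_eq0 oner_eq0.
- have -> : bform (ee 0 + ee 2) (- rv 0 - nu *: rv 2) = - (1 + nu) by bf_eval; ring.
  by rewrite oppr_eq0.
- bf_eval; ring.
Qed.

Lemma test1 : bform bb0 (rv 0) = 1.
Proof. rewrite /bb0. bf_eval. by ring. Qed.
Lemma test2 : bform (rv 0 - rv (n - 2)) (ee (n-2)) = -1.
Proof. bf_eval. by ring. Qed.

End Family.



Lemma fresh_list (F : fieldType) (F_infinite : forall s : seq F, exists x : F, x \notin s) m :
  exists s : seq F, size s = m /\ uniq (0 :: s).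
Proof.
elim: m => [|m [s [hs hu]]]; first by exists [::].
have [x hx] := F_infinite (0 :: s).
exists (x :: s); split; first by rewrite /= hs.
move: hu hx; rewrite /= !inE => /andP [h0 hu] /norP [hx0 hxs].
by rewrite hu hxs negb_or h0 eq_sym hx0.
Qed.

Lemma same_orbit_act (F : fieldType) n (s t : triple F n) :
  same_orbit s t -> exists g, is_isometry g /\ t = act_triple g s.
Proof.
case: t => [[a b] c]; case=> g [hg [/= e1 [/= e2 /= e3]]]; exists g; split => //.
by rewrite /act_triple -e1 -e2 -e3.
Qed.

Theorem proposition3p13 (F : fieldType)
    (F_infinite : forall s : seq F, exists x : F, x \notin s)
    (F_char : (2%:R : F) != 0)
    (n beta g1 g2 g3 : nat)
    (hb1 : (4 <= beta)%N) (hb2 : (beta <= n - 2)%N)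
    (hg1 : (2 <= g1)%N) (hg2 : (2 <= g2)%N) (hg3 : (2 <= g3)%N)
    (hsum : (g1 + g2 + g3)%N = n) :
  ~ finitely_many_orbits F n [:: n] [:: beta] [:: g1; g2; g3].
Proof.
case=> N [r [Hr Hcov]].
have [s [hs hu]] := fresh_list F_infinite N.+1.
pose lam (k : 'I_N.+1) := nth 0 s k.
pose t (k : 'I_N.+1) := fam n beta g1 g2 g3 (lam k - 1).
have ht : forall k, in_T [:: n] [:: beta] [:: g1; g2; g3] (t k).
  by move=> k; apply: fam_in_T.
have H : forall k : 'I_N.+1, exists i : 'I_N, same_orbit (r i) (t k).
  move=> k; have [i [hi ho]] := Hcov _ (ht k).
  by exists (Ordinal hi).
have [f hf] := fin_all_exists H.
have : ~~ injectiveb f.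
  apply/negP => /injectiveP hinj; have := leq_card f hinj.
  by rewrite !card_ord ltnn.
case/injectivePn => k1 [k2 hk12 hfk].
have hlam : forall k, lam k != 0.
  move=> k; apply/negP => /eqP hk; move: hu; rewrite /= => /andP [+ _].
  by rewrite -hk mem_nth // hs.
have lamE : forall k, 1 + (lam k - 1) = lam k by move=> k; rewrite addrC subrK.
have I1 : Inv (t k1) (lam k1).
  have := @fam_exists F n beta g1 g2 g3 (lam k1 - 1) hb1 hb2 hg1 hg2 hg3 hsum.
  by rewrite lamE; apply.
have [g1' [hg1' e1]] := same_orbit_act (hf k1).
have [g2' [hg2' e2]] := same_orbit_act (hf k2).
rewrite e1 in I1; have I0 := Inv_bwd hg1' I1.
rewrite hfk in I0; have I2 := Inv_fwd hg2' I0; rewrite -e2 in I2.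
have := fam_unique hb1 hb2 hg1 hg2 hg3 hsum I2; rewrite lamE => /eqP.
rewrite /lam nth_uniq ?hs //; last by case/andP: hu.
by apply/negP.
Qed.
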